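(* Let $G\sim\mathrm{ER}(n,p)$, $\varepsilon\in[0,1/2)$, $\delta>0$. Consider the 2-path voting estimator: fix a center vertex $c$, set $\hat x_c=0$, and for each $v\ne c$, for each $k\notin\{c,v\}$ such that both $(c,k)$ and $(k,v)$ are edges of $G$, record the vote $Y_{(c,k)}\oplus Y_{(k,v)}$; set $\hat x_v$ to the value receiving strictly more votes (a tie counts as failure). If $$\frac{(n-2)p^2(1-2\varepsilon)^4/2}{1+\frac13\left(1+p^2(1-2\varepsilon)^2\right)(1-2\varepsilon)^2}\ \ge\ (1+\delta)\log n,$$ then with probability at least $1-n^{-\delta}$ the estimator satisfies $\hat x\in\{x,x\oplus1^n\}$.
   Context: Model: $G=(V,E)$ with $V=[n]$ drawn from $\mathrm{ER}(n,p)$ (each edge present independently with probability $p$); unknown $x\in\{0,1\}^n$; for each edge $(i,j)$ one observes $Y_{(i,j)}=x_i\oplus x_j\oplus Z_{(i,j)}$ (mod 2) with $Z_{(i,j)}$ i.i.d. Bernoulli$(\varepsilon)$ independent of $G$. Logarithms are natural. *)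

(* Defs.v *)
From Stdlib Require Import Reals.
From mathcomp Require Import all_boot.
Set Implicit Arguments. Unset Strict Implicit. Unset Printing Implicit Defensive.

Definition fsumR (T : finType) (f : T -> R) : R :=
  foldr (fun t acc => Rplus (f t) acc) R0 (enum T).
Definition fprodR (T : finType) (f : T -> R) : R :=
  foldr (fun t acc => Rmult (f t) acc) R1 (enum T).

(* Sample space: for each ordered pair (i,j) with i < j, a pair
   (edge present in G, noise bit Z_(i,j)).  Entries with ~(i<j) are dummies,
   forced to (false,false) by the weight. *)
Definition Omega (n : nat) := {ffun 'I_n * 'I_n -> bool * bool}.

(* Probability weight of an outcome: G ~ ER(n,p), Z iid Bernoulli(eps),
   independent of G. *)
Definition weight (n : nat) (p eps : R) (w : Omega n) : R :=
  fprodR (fun ij : 'I_n * 'I_n =>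
    if (ij.1 < ij.2)%N then
      Rmult (if (w ij).1 then p else Rminus 1 p) (if (w ij).2 then eps else Rminus 1 eps)
    else if w ij == (false, false) then R1 else R0).

Definition Prob (n : nat) (p eps : R) (E : Omega n -> bool) : R :=
  fsumR (fun w : Omega n => if E w then weight p eps w else R0).

Definition key (n : nat) (i j : 'I_n) : 'I_n * 'I_n :=
  if (i < j)%N then (i, j) else (j, i).

Definition edge (n : nat) (w : Omega n) (i j : 'I_n) : bool :=
  (i != j) && (w (key i j)).1.

(* Observation Y_(i,j) = x_i xor x_j xor Z_(i,j) (only meaningful on edges). *)
Definition obs (n : nat) (x : 'I_n -> bool) (w : Omega n) (i j : 'I_n) : bool :=
  xorb (xorb (x i) (x j)) (w (key i j)).2.

Definition votes (n : nat) (x : 'I_n -> bool) (w : Omega n) (c v : 'I_n) (b : bool)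
  : nat :=
  #|[pred k : 'I_n | [&& k != c, k != v, edge w c k, edge w k v &
                       xorb (obs x w c k) (obs x w k v) == b]]|.

Definition estimator (n : nat) (x : 'I_n -> bool) (w : Omega n) (c : 'I_n)
  : option {ffun 'I_n -> bool} :=
  if [forall v : 'I_n, (v == c) || (votes x w c v true != votes x w c v false)]
  then Some [ffun v : 'I_n => if v == c then false
                              else (votes x w c v false < votes x w c v true)%N]
  else None.

Definition success (n : nat) (x : 'I_n -> bool) (c : 'I_n) (w : Omega n) : bool :=
  (estimator x w c == Some [ffun v => x v])
  || (estimator x w c == Some [ffun v => negb (x v)]).

(* Main.v *)
Require Import Defs.
From Stdlib Require Import Reals Lra.
From mathcomp Require Import all_boot.
From HB Require Import structures.
Set Implicit Arguments. Unset Strict Implicit. Unset Printing Implicit Defensive.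
Local Open Scope R_scope.

Lemma RplusA' : associative Rplus. Proof. by move=> *; rewrite Rplus_assoc. Qed.
Lemma RmultA' : associative Rmult. Proof. by move=> *; rewrite Rmult_assoc. Qed.
Lemma RmultDl' : left_distributive Rmult Rplus. Proof. by move=> *; rewrite Rmult_plus_distr_r. Qed.
Lemma RmultDr' : right_distributive Rmult Rplus. Proof. by move=> *; rewrite Rmult_plus_distr_l. Qed.
HB.instance Definition _ := Monoid.isComLaw.Build R R0 Rplus RplusA' Rplus_comm Rplus_0_l.
HB.instance Definition _ := Monoid.isComLaw.Build R R1 Rmult RmultA' Rmult_comm Rmult_1_l.
HB.instance Definition _ := Monoid.isMulLaw.Build R R0 Rmult Rmult_0_l Rmult_0_r.
HB.instance Definition _ := Monoid.isAddLaw.Build R Rmult Rplus RmultDl' RmultDr'.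

Notation "\sumR_ ( i : T ) F" := (\big[Rplus/R0]_(i : T) F) (at level 41, F at level 41, i, T at level 50).

Lemma fsumRE (T : finType) (f : T -> R) : fsumR f = \big[Rplus/R0]_(t : T) f t.
Proof.
rewrite /fsumR -big_enum /=.
by rewrite unlock /= /reducebig; elim: (enum T) => //= a l ->.
Qed.

Lemma fprodRE (T : finType) (f : T -> R) : fprodR f = \big[Rmult/R1]_(t : T) f t.
Proof.
rewrite /fprodR -big_enum /=.
by rewrite unlock /= /reducebig; elim: (enum T) => //= a l ->.
Qed.

Lemma test (I J : finType) (F : I -> J -> R) :
 \big[Rmult/R1]_(i : I) \big[Rplus/R0]_(j : J) F i j
    = \big[Rplus/R0]_(f : {ffun I -> J}) \big[Rmult/R1]_i F i (f i).
Proof. exact: bigA_distr_bigA. Qed.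


Definition Wt (I T : finType) (g : I -> T -> R) (w : {ffun I -> T}) := \big[Rmult/R1]_(i : I) g i (w i).
Definition upd (I T : finType) (w : {ffun I -> T}) (i0 : I) (t : T) : {ffun I -> T} :=
  [ffun i => if i == i0 then t else w i].

Lemma upd_same (I T : finType) (w : {ffun I -> T}) i0 t : upd w i0 t i0 = t.
Proof. by rewrite /upd ffunE eqxx. Qed.
Lemma upd_other (I T : finType) (w : {ffun I -> T}) i0 t i : i != i0 -> upd w i0 t i = w i.
Proof. by move=> h; rewrite /upd ffunE (negbTE h). Qed.
Lemma upd_upd (I T : finType) (w : {ffun I -> T}) i0 t : upd (upd w i0 t) i0 (w i0) = w.
Proof. apply/ffunP => i; rewrite /upd !ffunE; case: eqP => [->|] //. Qed.

Lemma resample (I T : finType) (g : I -> T -> R) i0 (Q : {ffun I -> T} -> R) :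
  \big[Rplus/R0]_(w : {ffun I -> T}) (Wt g w * Q w) * \big[Rplus/R0]_(t : T) g i0 t
  = \big[Rplus/R0]_(w : {ffun I -> T}) (Wt g w * \big[Rplus/R0]_(t : T) (g i0 t * Q (upd w i0 t))).
Proof.
pose W' (w : {ffun I -> T}) := \big[Rmult/R1]_(i | i != i0) g i (w i).
have WE w : Wt g w = g i0 (w i0) * W' w by rewrite /Wt (bigD1 i0).
have W'u w t : W' (upd w i0 t) = W' w.
  by apply: eq_bigr => i hi; rewrite upd_other.
pose F (u : {ffun I -> T} * T) := g i0 (u.1 i0) * W' u.1 * Q u.1 * g i0 u.2.
pose phi (u : {ffun I -> T} * T) := (upd u.1 i0 u.2, u.1 i0).
have phiK : involutive phi.
  by case=> w t; rewrite /phi /= upd_same upd_upd.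
transitivity (\big[Rplus/R0]_(u : {ffun I -> T} * T) F u).
  rewrite big_distrl /= -(pair_bigA _ (fun w t => F (w, t))) /=; apply: eq_bigr => w _.
  rewrite big_distrr /=; apply: eq_bigr => t _; rewrite /F WE /=; ring.
rewrite (reindex_inj (inv_inj phiK)) /= -(pair_bigA _ (fun w t => F (phi (w, t)))) /=.
apply: eq_bigr => w _; rewrite big_distrr /=; apply: eq_bigr => t _.
rewrite /F /phi /= upd_same W'u WE; ring.
Qed.


Lemma total_mass (I T : finType) (g : I -> T -> R) :
  \big[Rplus/R0]_(w : {ffun I -> T}) Wt g w = \big[Rmult/R1]_(i : I) \big[Rplus/R0]_(t : T) g i t.
Proof. by rewrite bigA_distr_bigA. Qed.

Lemma sum_bool2 (F : bool * bool -> R) :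
  \big[Rplus/R0]_(t : bool * bool) F t =
  F (true, true) + F (true, false) + (F (false, true) + F (false, false)).
Proof.
rewrite (eq_bigr (fun t => F (t.1, t.2))); last by case.
rewrite -(pair_bigA _ (fun a b => F (a, b))) /= big_bool /= !big_bool /=; ring.
Qed.

Definition gw (n : nat) (p eps : R) (ij : 'I_n * 'I_n) (t : bool * bool) : R :=
  if (ij.1 < ij.2)%N then
      Rmult (if t.1 then p else Rminus 1 p) (if t.2 then eps else Rminus 1 eps)
    else if t == (false, false) then R1 else R0.

Lemma weightE n p eps (w : Omega n) : weight p eps w = Wt (@gw n p eps) w.
Proof. by rewrite /weight fprodRE. Qed.

Lemma gw_sum n p eps (ij : 'I_n * 'I_n) : \big[Rplus/R0]_(t : bool * bool) gw p eps ij t = 1.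
Proof.
rewrite sum_bool2 /gw; case: ifP => _ /=; first ring.
rewrite /=; ring.
Qed.

Lemma mass1 n p eps : \big[Rplus/R0]_(w : Omega n) Wt (@gw n p eps) w = 1.
Proof.
rewrite total_mass big1 // => ij _; exact: gw_sum.
Qed.

Lemma gw_ge0 n p eps (ij : 'I_n * 'I_n) t : 0 <= p <= 1 -> 0 <= eps <= 1 -> 0 <= @gw n p eps ij t.
Proof.
move=> hp he; rewrite /gw; case: ifP => _.
  apply: Rmult_le_pos; case: ifP => _; lra.
case: ifP => _; lra.
Qed.

Lemma Wt_ge0 (I T : finType) (g : I -> T -> R) w : (forall i t, 0 <= g i t) -> 0 <= Wt g w.
Proof.
move=> h; rewrite /Wt; elim/big_rec: _ => [|i x _ hx]; first lra.
by apply: Rmult_le_pos.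
Qed.


Lemma key_inj n (i j i' j' : 'I_n) : key i j = key i' j' ->
  (i = i' /\ j = j') \/ (i = j' /\ j = i').
Proof.
rewrite /key; case: ifP => _; case: ifP => _; case=> -> ->; tauto.
Qed.

Lemma key_lt n (i j : 'I_n) : i != j -> ((key i j).1 < (key i j).2)%N.
Proof.
move=> hne; rewrite /key; case: (ltngtP i j) => h //=.
by move: hne; rewrite (val_inj h) eqxx.
Qed.

Definition hh (r : R) (u1 u2 : bool * bool) : R :=
  if u1.1 && u2.1 then (if u1.2 == u2.2 then / r else r) else 1.

Definition hk n (r : R) (c v k : 'I_n) (w : Omega n) : R :=
  if (k == c) || (k == v) then 1 else hh r (w (key c k)) (w (key k v)).

Definition Phi n r (c v : 'I_n) (s : seq 'I_n) (w : Omega n) : R :=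
  \big[Rmult/R1]_(k <- s) hk r c v k w.

Definition EW n p eps (F : Omega n -> R) : R :=
  \big[Rplus/R0]_(w : Omega n) (Wt (@gw n p eps) w * F w).

Lemma hh_mean n p eps (ij ij' : 'I_n * 'I_n) r :
  (ij.1 < ij.2)%N -> (ij'.1 < ij'.2)%N -> r = 1 + (1 - 2 * eps) ^ 2 -> 0 <= eps ->
  \big[Rplus/R0]_(t : bool * bool) (gw p eps ij t *
     \big[Rplus/R0]_(t' : bool * bool) (gw p eps ij' t' * hh r t t'))
  = 1 - p ^ 2 * (1 - 2 * eps) ^ 4 / 2.
Proof.
move=> hij hij' -> he.
rewrite !sum_bool2 /gw /= hij hij' /hh /=.
field; nra.
Qed.

Lemma keys_ne n (c v k k' : 'I_n) :
  c != v -> k != c -> k != v -> k' != c -> k' != v -> k' != k ->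
  [/\ key c k' != key c k, key k' v != key c k,
      key c k' != key k v & key k' v != key k v].
Proof.
move=> /eqP a /eqP b /eqP d /eqP e /eqP f /eqP g.
split; apply/eqP => /key_inj; intuition congruence.
Qed.

Lemma Phi_upd n r (c v k : 'I_n) s w t :
  c != v -> k != c -> k != v -> k \notin s ->
  (Phi r c v s (upd w (key c k) t) = Phi r c v s w) /\
  (Phi r c v s (upd w (key k v) t) = Phi r c v s w).
Proof.
move=> hcv hkc hkv hks; split; apply: eq_big_seq => k' hk'; rewrite /hk;
  (case: ifP => // /norP [hk'c hk'v]);
  have hk'k : k' != k by (apply/eqP => e; move: hks; rewrite -e hk').
- by case: (keys_ne hcv hkc hkv hk'c hk'v hk'k) => h1 h2 h3 h4; rewrite !upd_other.
- by case: (keys_ne hcv hkc hkv hk'c hk'v hk'k) => h1 h2 h3 h4; rewrite !upd_other.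
Qed.

Lemma EW_Phi n p eps r (c v : 'I_n) s :
  c != v -> uniq s -> r = 1 + (1 - 2 * eps) ^ 2 -> 0 <= eps ->
  EW p eps (Phi r c v s) =
  (1 - p ^ 2 * (1 - 2 * eps) ^ 4 / 2) ^ count (fun k => (k != c) && (k != v)) s.
Proof.
move=> hcv + hr he; elim: s => [_|k s IH].
  transitivity (\big[Rplus/R0]_(w : Omega n) Wt (gw p eps) w); last by rewrite mass1.
  by apply: eq_bigr => w _; rewrite /Phi big_nil Rmult_1_r.
rewrite cons_uniq => /andP [hks hu]; rewrite [X in _ ^ X]/=.
have PhiE w : Phi r c v (k :: s) w = hk r c v k w * Phi r c v s w by rewrite /Phi big_cons.
have -> : EW p eps (Phi r c v (k :: s)) = \big[Rplus/R0]_(w : Omega n)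
   (Wt (gw p eps) w * (hk r c v k w * Phi r c v s w)).
  by apply: eq_bigr => w _; rewrite PhiE.
rewrite /hk; case hcase: ((k == c) || (k == v)).
  have -> : (k != c) && (k != v) = false by rewrite -negb_or hcase.
  by rewrite add0n -IH // /EW; apply: eq_bigr => w _; rewrite Rmult_1_l.
move/norP: hcase => [hkc hkv].
rewrite hkc hkv add1n -tech_pow_Rmult -IH // /EW.
set p1 := key c k; set p2 := key k v.
have hp12 : p1 != p2.
  by apply/eqP => /key_inj; move: hcv hkc hkv => /eqP ? /eqP ? /eqP ?; intuition congruence.
have hp21 : p1 != p2 -> p2 != p1 by rewrite eq_sym.
have U1 t w : Phi r c v s (upd w p1 t) = Phi r c v s w by case: (Phi_upd r w t hcv hkc hkv hks).
have U2 t w : Phi r c v s (upd w p2 t) = Phi r c v s w by case: (Phi_upd r w t hcv hkc hkv hks).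
pose H1 (u : bool * bool) := \big[Rplus/R0]_(t' : bool * bool) (gw p eps p2 t' * hh r u t').
transitivity (\big[Rplus/R0]_(w : Omega n) (Wt (@gw n p eps) w * (H1 (w p1) * Phi r c v s w))).
  rewrite -[LHS]Rmult_1_r -(gw_sum p eps p2) resample; apply: eq_bigr => w _.
  congr (_ * _); rewrite /H1 big_distrl /=; apply: eq_bigr => t _.
  by rewrite (U2 t w) upd_same upd_other // Rmult_assoc.
have R1 := resample (gw p eps) p1 (fun w => H1 (w p1) * Phi r c v s w); cbv beta in R1.
rewrite -[LHS]Rmult_1_r -[X in _ * X = _](gw_sum p eps p1) R1.
have hkc' : c != k by rewrite eq_sym.
rewrite -(@hh_mean n p eps _ _ r (key_lt hkc') (key_lt hkv) hr he) big_distrr /=.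
apply: eq_bigr => w _.
rewrite (eq_bigr (fun t => gw p eps p1 t * H1 t * Phi r c v s w)); last first.
  by move=> t _; rewrite U1 upd_same Rmult_assoc.
rewrite -big_distrl /=; rewrite /H1 /p1 /p2.
move: (Wt _ _) (Phi _ _ _ _ _) => A B.
by rewrite -Rmult_assoc (Rmult_comm A) Rmult_assoc.
Qed.


Lemma card_count (T : finType) (P : pred T) : #|[pred k | P k]| = count P (enum T).
Proof. by rewrite cardE enumT /enum_mem size_filter; apply: eq_count. Qed.

Lemma count_notcv n (c v : 'I_n) : c != v ->
  count (fun k => (k != c) && (k != v)) (enum 'I_n) = (n - 2)%N.
Proof.
move=> hcv; rewrite -card_count.
have h := cardC (pred2 c v); rewrite card2 hcv card_ord in h.
rewrite -[X in _ = (X - 2)%N]h addKn; apply: eq_card => k; rewrite !inE /=.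
by rewrite negb_or.
Qed.

Definition Wv n (x : 'I_n -> bool) (w : Omega n) (c v : 'I_n) (b : bool) (k : 'I_n) : bool :=
  [&& k != c, k != v, edge w c k, edge w k v &
                       xorb (obs x w c k) (obs x w k v) == b].

Lemma votesE n (x : 'I_n -> bool) w (c v : 'I_n) b :
  votes x w c v b = count (Wv x w c v b) (enum 'I_n).
Proof. by rewrite /votes -card_count. Qed.

Lemma hkE n r (x : 'I_n -> bool) w (c v k : 'I_n) :
  hk r c v k w = if Wv x w c v (~~ xorb (x c) (x v)) k then r
                 else if Wv x w c v (xorb (x c) (x v)) k then / r else 1.
Proof.
rewrite /hk /Wv /edge /obs.
case: eqP => [->|/eqP hkc] //=.
case: eqP => [->|/eqP hkv] //=.
rewrite eq_sym hkc /hh /=.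
case: (w (key c k)) => e1 z1; case: (w (key k v)) => e2 z2 /=.
case: e1; case: e2 => //=; case: z1; case: z2; case: (x c); case: (x v); case: (x k) => //=.
Qed.

Lemma Phi_pow n r (x : 'I_n -> bool) w (c v : 'I_n) s :
  Phi r c v s w = r ^ count (Wv x w c v (~~ xorb (x c) (x v))) s *
                  (/ r) ^ count (Wv x w c v (xorb (x c) (x v))) s.
Proof.
elim: s => [|k s IH]; first by rewrite /Phi big_nil /=; ring.
rewrite /Phi big_cons -/(Phi r c v s w) IH (hkE r x) /=.
case: ifP => hW.
  have -> : Wv x w c v (xorb (x c) (x v)) k = false.
    by move: hW; rewrite /Wv; case/and5P => _ _ _ _ /eqP ->; case: (xorb (x c) (x v)); rewrite /= !andbF.
  rewrite add1n add0n /=; ring.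
case: ifP => hC; rewrite ?add1n !add0n /=; move: (/ r) => ir; ring.
Qed.

Lemma Phi_ge1 n r (x : 'I_n -> bool) w (c v : 'I_n) s :
  1 <= r ->
  (count (Wv x w c v (xorb (x c) (x v))) s <= count (Wv x w c v (~~ xorb (x c) (x v))) s)%N ->
  1 <= Phi r c v s w.
Proof.
move=> hr hle; rewrite (Phi_pow r x) -(subnK hle) pow_add.
rewrite Rmult_assoc -Rinv_pow; last lra.
rewrite Rinv_r; last by apply: pow_nonzero; lra.
rewrite Rmult_1_r; apply: pow_R1_Rle; lra.
Qed.

Lemma Phi_ge0 n r (c v : 'I_n) s w : 0 < r -> 0 <= Phi r c v s w.
Proof.
move=> hr; rewrite /Phi; elim/big_rec: _ => [|k y _ hy]; first lra.
apply: Rmult_le_pos => //; rewrite /hk /hh.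
case: ifP => _; first lra. case: ifP => _; last lra.
case: ifP => _; [apply: Rlt_le; apply: Rinv_0_lt_compat|]; lra.
Qed.


Lemma exp_le' x y : x <= y -> exp x <= exp y.
Proof.
move=> h; case: (Rle_lt_or_eq_dec _ _ h) => [h'|->]; last lra.
by apply: Rlt_le; apply: exp_increasing.
Qed.

Lemma exp_pow' x k : exp x ^ k = exp (INR k * x).
Proof.
elim: k => [|k IH]; first by rewrite /= Rmult_0_l exp_0.
rewrite -tech_pow_Rmult IH -exp_plus S_INR; congr exp; ring.
Qed.

Lemma real_part (k : nat) (p eps delta : R) :
  0 <= p <= 1 -> 0 <= eps < 1 / 2 -> 0 < delta ->
  (INR (S (S k)) - 2) * p ^ 2 * (1 - 2 * eps) ^ 4 / 2
     / (1 + 1 / 3 * (1 + p ^ 2 * (1 - 2 * eps) ^ 2) * (1 - 2 * eps) ^ 2)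
   >= (1 + delta) * ln (INR (S (S k))) ->
  INR (S k) * (1 - p ^ 2 * (1 - 2 * eps) ^ 4 / 2) ^ k <= Rpower (INR (S (S k))) (- delta).
Proof.
move=> hp he hd hyp.
set n := INR (S (S k)).
have hn : n = INR k + 2 by rewrite /n !S_INR; ring.
have hk0 : 0 <= INR k by apply: pos_INR.
set a := (1 - 2 * eps) ^ 2.
have ha0 : 0 <= a by rewrite /a; apply: pow2_ge_0.
have ha1 : a <= 1 by rewrite /a; nra.
have e4 : (1 - 2 * eps) ^ 4 = a * a by rewrite /a; ring.
set y := p ^ 2 * (1 - 2 * eps) ^ 4 / 2.
have hy0 : 0 <= y by rewrite /y e4; have := pow2_ge_0 p; nra.
have hp2 : p ^ 2 <= 1 by nra.
have hy1 : y <= 1 by rewrite /y e4; nra.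
have h1 : (1 - y) ^ k <= exp (- (INR k * y)).
  have -> : - (INR k * y) = INR k * - y by ring.
  rewrite -(exp_pow' (- y)).
  apply: pow_incr; split; first lra.
  have := exp_ineq1_le (- y); lra.
set D := 1 + 1 / 3 * (1 + p ^ 2 * a) * a.
have hD : 1 <= D by rewrite /D; have := pow2_ge_0 p; nra.
have hL : (n - 2) * p ^ 2 * (1 - 2 * eps) ^ 4 / 2 / D <= INR k * y.
  have -> : (n - 2) * p ^ 2 * (1 - 2 * eps) ^ 4 / 2 = INR k * y by rewrite hn /y; field.
  have hN : 0 <= INR k * y by nra.
  rewrite /Rdiv; rewrite -{2}(Rmult_1_r (INR k * y)); apply: Rmult_le_compat_l => //.
  rewrite -Rinv_1; apply: Rinv_le_contravar; lra.
have hnpos : 0 < n by rewrite hn; lra.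
have h2 : exp (- (INR k * y)) <= exp (- ((1 + delta) * ln n)).
  apply: exp_le'; move: hyp; rewrite -/n -/a -/D => hyp; lra.
have h3 : INR (S k) <= n by rewrite S_INR hn; lra.
rewrite /Rpower.
have -> : exp (- delta * ln n) = n * exp (- ((1 + delta) * ln n)).
  by rewrite -[X in _ = X * _](exp_ln n hnpos) -exp_plus; congr exp; ring.
have hm0 : 0 <= (1 - y) ^ k by apply: pow_le; lra.
have hS : 0 <= INR (S k) by apply: pos_INR.
apply: Rle_trans (_ : INR (S k) * exp (- ((1 + delta) * ln n)) <= _).
  apply: Rmult_le_compat_l => //; lra.
apply: Rmult_le_compat_r => //; apply: Rlt_le; apply: exp_pos.
Qed.


Lemma sum_le (I : finType) (P : pred I) (F G : I -> R) :
  (forall i, P i -> F i <= G i) ->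
  \big[Rplus/R0]_(i | P i) F i <= \big[Rplus/R0]_(i | P i) G i.
Proof.
move=> h; elim/big_ind2: _ => //; first lra.
by move=> *; apply: Rplus_le_compat.
Qed.

Lemma sum_ge0 (I : finType) (P : pred I) (F : I -> R) :
  (forall i, P i -> 0 <= F i) -> 0 <= \big[Rplus/R0]_(i | P i) F i.
Proof.
move=> h; elim/big_rec: _ => // [|i y hi hy]; first lra.
by have := h i hi; lra.
Qed.

Lemma sum_const_ne n (c : 'I_n) (K : R) :
  \big[Rplus/R0]_(v | v != c) K = INR n.-1 * K.
Proof.
rewrite big_const_seq [index_enum _]unlock -enumT -card_count.
have -> : #|[pred k | k != c]| = n.-1.
  by rewrite -[in RHS](card_ord n) -(cardC1 c); apply: eq_card => k; rewrite !inE.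
elim: n.-1 => [|k IH]; first by rewrite /=; ring.
by rewrite iterS IH S_INR; ring.
Qed.

Lemma succ_of_nofail n (x : 'I_n -> bool) (c : 'I_n) w :
  (forall v, v != c -> (votes x w c v (~~ xorb (x c) (x v)) < votes x w c v (xorb (x c) (x v)))%N) ->
  success x c w.
Proof.
move=> H; rewrite /success /estimator.
case: ifP => [_|/negP []]; last first.
  apply/forallP => v; case: eqVneq => //= hv.
  have := H v hv; case: (xorb _ _) => /= h; rewrite neq_ltn h ?orbT //.
case hx: (x c); apply/orP; [right|left]; apply/eqP; congr Some; apply/ffunP => v;
  rewrite !ffunE; (case: eqVneq => [->|hv]; first by rewrite hx);
  have := H v hv; rewrite hx /=; case: (x v) => /= h //.
- by rewrite ltnNge (ltnW h).
- by rewrite ltnNge (ltnW h).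
Qed.

Unset Implicit Arguments.

Theorem mainTheorem6 (n : nat) (p eps delta : R) (x : 'I_n -> bool) (c : 'I_n) :
  (0 <= p <= 1) ->
  (0 <= eps < 1 / 2) ->
  (0 < delta) ->
  ((INR n - 2) * p ^ 2 * (1 - 2 * eps) ^ 4 / 2
     / (1 + 1 / 3 * (1 + p ^ 2 * (1 - 2 * eps) ^ 2) * (1 - 2 * eps) ^ 2)
   >= (1 + delta) * ln (INR n)) ->
  (Prob p eps (success x c) >= 1 - Rpower (INR n) (- delta)).
Proof.
move=> hp he hd hyp.
set r := 1 + (1 - 2 * eps) ^ 2.
have hr1 : 1 <= r by rewrite /r; have := pow2_ge_0 (1 - 2 * eps); lra.
have hr0 : 0 < r by lra.
have he1 : 0 <= eps <= 1 by lra.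
set m := 1 - p ^ 2 * (1 - 2 * eps) ^ 4 / 2.
pose PhiS (w : Omega n) := \big[Rplus/R0]_(v | v != c) Phi r c v (enum 'I_n) w.
have Hpt w : (if success x c w then 0 else 1) <= PhiS w.
  case: (boolP (success x c w)) => hs.
    by apply: sum_ge0 => v _; apply: Phi_ge0.
  have : ~~ [forall v, (v != c) ==> (votes x w c v (~~ xorb (x c) (x v)) < votes x w c v (xorb (x c) (x v)))%N].
    apply: contra hs => /forallP H; apply: succ_of_nofail => v hv; exact: (implyP (H v) hv).
  move/forallPn => [v]; rewrite negb_imply -leqNgt => /andP [hv hf].
  rewrite /PhiS (bigD1 v) //=.
  have h1 : 1 <= Phi r c v (enum 'I_n) w.
    by apply: (@Phi_ge1 n r x w c v) => //; rewrite -!votesE.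
  have h2 : 0 <= \big[Rplus/R0]_(i | (i != c) && (i != v)) Phi r c i (enum 'I_n) w.
    by apply: sum_ge0 => i _; apply: Phi_ge0.
  rewrite -[1]Rplus_0_r; apply: Rplus_le_compat => //; apply: sum_ge0 => i _; exact: Phi_ge0.
have Hprob : Prob p eps (success x c) =
    1 - \big[Rplus/R0]_(w : Omega n) (Wt (gw p eps) w * (if success x c w then 0 else 1)).
  rewrite /Prob.
  have -> : fsumR (fun w : Omega n => if success x c w then weight p eps w else R0) =
     \big[Rplus/R0]_(w : Omega n) (if success x c w then weight p eps w else 0).
    by rewrite fsumRE.
  have Hs : \big[Rplus/R0]_(w : Omega n) (if success x c w then weight p eps w else 0) +
     \big[Rplus/R0]_(w : Omega n) (Wt (gw p eps) w * (if success x c w then 0 else 1)) = 1.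
    rewrite -[RHS](mass1 n p eps) -big_split; apply: eq_bigr => w _; rewrite weightE /=.
    by case: (success x c w); ring.
  lra.
have Hbound : \big[Rplus/R0]_(w : Omega n) (Wt (gw p eps) w * (if success x c w then 0 else 1))
    <= INR n.-1 * m ^ (n - 2).
  apply: Rle_trans (_ : \big[Rplus/R0]_(w : Omega n) (Wt (gw p eps) w * PhiS w) <= _).
    apply: sum_le => w _; apply: Rmult_le_compat_l => //.
    by apply: Wt_ge0 => i t; apply: gw_ge0.
  rewrite -(sum_const_ne c).
  rewrite (eq_bigr (fun w => \big[Rplus/R0]_(v | v != c) (Wt (gw p eps) w * Phi r c v (enum 'I_n) w))); last first.
    by move=> w _; rewrite /PhiS big_distrr.
  rewrite exchange_big /=; apply: Req_le; apply: eq_bigr => v hv.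
  have hcv : c != v by rewrite eq_sym.
  by rewrite -(count_notcv hcv) -(@EW_Phi n p eps r c v (enum 'I_n) hcv (enum_uniq 'I_n) (erefl r) (proj1 he1)).
rewrite Hprob.
suff : INR n.-1 * m ^ (n - 2) <= Rpower (INR n) (- delta) by lra.
case: n x c hyp {PhiS Hpt Hprob Hbound} => [|[|k]] x c hyp.
- by case: c.
- rewrite /= Rmult_0_l; apply: Rlt_le; apply: exp_pos.
- have -> : (k.+2 - 2 = k)%N by rewrite subn2.
  exact: real_part.
Qed.
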